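(* Let $p>2$ be a prime and let $V'=\{\mathbf{v}\in\{\pm1\}^{4p} : \mathbf{v}_{4p}=1,\ \sum_{i=1}^{4p}\mathbf{v}_i=0\}$. If $S\subseteq V'$ contains no two (distinct) vectors $\mathbf{u},\mathbf{v}$ with $\langle\mathbf{u},\mathbf{v}\rangle=0$, then $|S|\le \sum_{k=0}^{p-1}\binom{4p}{k}\le 2\binom{4p}{p-1}$.
   Context: $\langle\cdot,\cdot\rangle$ is the standard inner product on $\mathbb{R}^{4p}$. *)

(* Defs.v *)
From mathcomp Require Import all_boot all_order all_algebra.
Set Implicit Arguments. Unset Strict Implicit. Unset Printing Implicit Defensive.
Import Order.TTheory GRing.Theory Num.Theory.
Local Open Scope ring_scope.

Definition dotv (n : nat) (u v : 'rV[int]_n) : int := \sum_(i < n) u 0 i * v 0 i.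

Definition inVprime (p : nat) (v : 'rV[int]_(4 * p)) : Prop :=
  (forall i : 'I_(4 * p), v 0 i = 1 \/ v 0 i = -1) /\
  (forall i : 'I_(4 * p), nat_of_ord i = (4 * p).-1 -> v 0 i = 1) /\
  \sum_(i < 4 * p) v 0 i = 0.

(* Main.v *)
Require Import Defs.
From mathcomp Require Import all_boot all_order all_algebra.
From mathcomp Require Import zify ring lra.
Import Order.TTheory GRing.Theory Num.Theory.
Set Implicit Arguments. Unset Strict Implicit.
Local Open Scope ring_scope.

Definition Pset n (v : 'rV[int]_n) : {set 'I_n} := [set i | v 0 i == 1].

Lemma pm1E n (v : 'rV[int]_n) i : (v 0 i = 1 \/ v 0 i = -1) ->
  v 0 i = 2 * (i \in Pset v)%:R - 1.
Proof. by rewrite inE; case=> ->. Qed.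

Lemma sum_ind n (A : {set 'I_n}) : \sum_i ((i \in A)%:R : int) = #|A|%:R.
Proof.
rewrite (eq_bigr (fun i => if i \in A then 1 else 0)); last by move=> i _; case: (i \in A).
by rewrite -big_mkcond sumr_const.
Qed.

Lemma sum_pm n (v : 'rV[int]_n) : (forall i, v 0 i = 1 \/ v 0 i = -1) ->
  \sum_i v 0 i = 2 * #|Pset v|%:R - n%:R.
Proof.
move=> h; rewrite (eq_bigr _ (fun i _ => pm1E (h i))) sumrB -mulr_sumr sum_ind.
by rewrite sumr_const card_ord.
Qed.

Lemma cardP p (v : 'rV[int]_(4 * p)) : inVprime v -> #|Pset v| = (2 * p)%N.
Proof.
move=> [h1 [_ h3]]; move: h3; rewrite sum_pm // => /eqP.
rewrite subr_eq0 => /eqP h.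
apply/eqP; rewrite -(eqr_nat int) natrM; apply/eqP.
have : 2 * (#|Pset v|%:R : int) = 2 * (2 * p%:R) by rewrite h natrM; ring.
by move/mulfI; apply.
Qed.

Lemma dotP p (u v : 'rV[int]_(4 * p)) : inVprime u -> inVprime v ->
  dotv u v = 4 * #|Pset u :&: Pset v|%:R - 4 * p%:R.
Proof.
move=> hu hv; have cu := cardP hu; have cv := cardP hv.
case: hu => [hu _]; case: hv => [hv _].
rewrite /dotv (eq_bigr (fun i => 4 * ((i \in Pset u :&: Pset v)%:R) - 2 * (i \in Pset u)%:R
   - 2 * (i \in Pset v)%:R + 1)); last first.
  move=> i _; rewrite (pm1E (hu i)) (pm1E (hv i)) in_setI.
  by case: (i \in Pset u); case: (i \in Pset v); rewrite /=; ring.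
rewrite big_split /= !sumrB -!mulr_sumr !sum_ind cu cv sumr_const card_ord !natrM.
ring.
Qed.

Lemma P_inj n (u v : 'rV[int]_n) : (forall i, u 0 i = 1 \/ u 0 i = -1) ->
  (forall i, v 0 i = 1 \/ v 0 i = -1) -> Pset u = Pset v -> u = v.
Proof.
move=> hu hv e; apply/rowP => i.
by rewrite (pm1E (hu i)) (pm1E (hv i)) e.
Qed.

Section Fp.
Variable p : nat.
Hypothesis hp : prime p.

Lemma natFp_dvd n : (p %| n)%N -> n%:R = 0 :> 'F_p.
Proof. by move/dvdnP=> [k ->]; rewrite natrM pchar_Fp_0 // mulr0. Qed.

Lemma factFp : (p.-1)`!%:R = -1 :> 'F_p.
Proof.
have h1 : (1 < p)%N by apply: prime_gt1.
have hw : (p %| (p.-1)`!.+1)%N by rewrite -(Wilson h1).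
have := @natFp_dvd _ hw.
by rewrite -[(p.-1)`!.+1]addn1 natrD => /eqP; rewrite addr_eq0 => /eqP.
Qed.

Lemma ffactFp j m : ((p + j) ^_ m)%:R = (j ^_ m)%:R :> 'F_p.
Proof.
elim: m j => [|m IH] j; first by rewrite !ffactn0.
rewrite !ffactnS !natrM natrD pchar_Fp_0 // add0r.
case: j => [|j]; first by rewrite ?mulr0n !mul0r.
by rewrite addnS /= IH.
Qed.

Lemma binFp_diag : 'C((2 * p)%N.-1, p.-1)%:R = 1 :> 'F_p.
Proof.
have h1 : (1 < p)%N by apply: prime_gt1.
have e : ((2 * p)%N.-1 = p + p.-1)%N by lia.
have := bin_ffact (2 * p).-1 p.-1.
rewrite e => /(congr1 (fun n => n%:R : 'F_p)).
rewrite natrM ffactFp ffactnn factFp => /eqP.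
by rewrite mulrN1 eqr_opp => /eqP.
Qed.

Lemma binFp_off c : (c < (2 * p)%N.-1)%N -> c != p.-1 -> 'C(c, p.-1)%:R = 0 :> 'F_p.
Proof.
move=> hc hne.
have h1 : (1 < p)%N by apply: prime_gt1.
have [lt|ge] := ltnP c p.-1; first by rewrite bin_small.
have hc2 : (p <= c)%N.
  move: hne ge; rewrite neq_ltn => /orP[h|h] ?; first lia.
  lia.
have e : c = (p + (c - p))%N by lia.
have := bin_ffact c p.-1.
rewrite {2}e => /(congr1 (fun n => n%:R : 'F_p)).
rewrite natrM ffactFp ffact_small ?factFp.
  by rewrite mulrN1 => /eqP; rewrite oppr_eq0 => /eqP.
move: hc; rewrite mul2n -addnn; lia.
Qed.
End Fp.

Section BinLe.
Local Open Scope nat_scope.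
Lemma sum_bin_le n m : 3 * m <= n.+1 -> \sum_(0 <= k < m.+1) 'C(n,k) <= 2 * 'C(n,m).
Proof.
elim: m => [|m IH] h; first by rewrite big_nat1 bin0.
rewrite big_nat_recr //=.
have h2 : 2 * 'C(n, m) <= 'C(n, m.+1).
  rewrite -(leq_pmul2l (ltn0Sn m)) mul_bin_left mulnA.
  apply: leq_mul => //; lia.
have h3 : 3 * m <= n.+1 by lia.
have := IH h3; lia.
Qed.
End BinLe.

Theorem mainTheorem4 (p : nat) (hp : prime p) (hp2 : (2 < p)%N)
  (S : seq 'rV[int]_(4 * p)) (huniq : uniq S)
  (hS : forall v, v \in S -> inVprime v)
  (horth : forall u v, u \in S -> v \in S -> u != v -> dotv u v != 0) :
  (size S <= \sum_(0 <= k < p) 'C(4 * p, k))%N /\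
  (\sum_(0 <= k < p) 'C(4 * p, k) <= 2 * 'C(4 * p, p.-1))%N.
Proof.
have esum : (\sum_(0 <= k < p) 'C(4 * p, k) = \sum_(0 <= k < p.-1.+1) 'C(4 * p, k))%N.
  by rewrite prednK //; lia.
split; last by rewrite esum; apply: sum_bin_le; lia.
apply: (@leq_trans 'C(4 * p, p.-1)); last first.
  by rewrite esum big_nat_recr //= leq_addl.
have h4p : ((4 * p).-1 < 4 * p)%N by lia.
pose lst : 'I_(4 * p) := Ordinal h4p.
pose W (v : 'rV[int]_(4 * p)) := Pset v :\ lst.
pose M := [set T : {set 'I_(4 * p)} | #|T| == p.-1].
pose n := size S.
pose A : 'M['F_p]_(n, #|M|) :=
  \matrix_(i < n, j < #|M|) ((@enum_val _ (pred_of_set M) j \subset W (nth 0 S i))%:R).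
have lstP v : v \in S -> lst \in Pset v.
  by move/hS=> [_ [h _]]; rewrite inE; apply/eqP; apply: h.
have key : A *m A^T = 1%:M.
  apply/matrixP => i k; rewrite !mxE.
  rewrite (eq_bigr (fun j : 'I_#|M| => ((@enum_val _ (pred_of_set M) j \subset W (nth 0 S i) :&: W (nth 0 S k)))%:R));
    last by move=> j _; rewrite !mxE subsetI; case: (_ \subset _); case: (_ \subset _);
      rewrite /= ?mulr1 ?mulr0.
  set X := W (nth 0 S i) :&: W (nth 0 S k).
  have be : \sum_(T in M) ((T \subset X)%:R : 'F_p) =
     \sum_(j < #|M|) ((@enum_val _ (pred_of_set M) j \subset X)%:R : 'F_p)
    := big_enum_val _.
  rewrite -be.
  rewrite (eq_bigr (fun T : {set 'I_(4 * p)} => if T \subset X then (1 : 'F_p) else 0)); last by move=> T _; case: (_ \subset _).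
  rewrite -big_mkcondr /= sumr_const.
  have -> : #|(fun T : {set 'I_(4 * p)} => (T \in M) && (T \subset X))| =
            #|[set T : {set 'I_(4 * p)} | T \subset X & #|T| == p.-1]|.
    by apply: eq_card => T; rewrite [RHS]inE -topredE /= inE andbC.
  rewrite cards_draws.
  have hi : nth 0 S i \in S by apply: mem_nth; exact: ltn_ord.
  have hk : nth 0 S k \in S by apply: mem_nth; exact: ltn_ord.
  have cu := cardP (hS _ hi); have cv := cardP (hS _ hk).
  have lu := lstP _ hi; have lv := lstP _ hk.
  case: (eqVneq i k) => [eik|nik].
    subst k; rewrite /X setIid.
    have -> : #|W (nth 0 S i)| = (2 * p)%N.-1.
      by have := cardsD1 lst (Pset (nth 0 S i)); rewrite lu cu /W /=; move=> ->; rewrite add1n.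
    by rewrite (binFp_diag hp).
  clear be; set u := nth 0 S i in X hi cu lu *; set v := nth 0 S k in X hk cv lv *.
  have huv : u != v by rewrite /u /v nth_uniq.
  have eX : X = (Pset u :&: Pset v) :\ lst.
    by apply/setP=> x; rewrite /X /W !inE; do ! case: (_ == _).
  have ca : #|Pset u :&: Pset v| = (#|X| + 1)%N.
    by have := cardsD1 lst (Pset u :&: Pset v); rewrite inE lu lv -eX /= => ->; rewrite addnC.
  have a2 : (#|Pset u :&: Pset v| <= 2 * p)%N by rewrite -cu subset_leq_card // subsetIl.
  have a3 : #|Pset u :&: Pset v| != p.
    apply/eqP => e; move: (horth _ _ hi hk huv); rewrite (dotP (hS _ hi) (hS _ hk)) e.
    by rewrite subrr eqxx.
  have a4 : #|Pset u :&: Pset v| != (2 * p)%N.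
    apply/eqP => e; move/negP: huv; apply.
    have e1 : Pset u :&: Pset v = Pset u.
      by apply/eqP; rewrite eqEcard subsetIl e cu leqnn.
    have e2 : Pset u :&: Pset v = Pset v.
      by apply/eqP; rewrite eqEcard subsetIr e cv leqnn.
    have [hu1 _] := hS _ hi; have [hv1 _] := hS _ hk.
    by apply/eqP; apply: P_inj hu1 hv1 _; rewrite -e1 e2.
  rewrite (binFp_off hp) //.
    move: a3 a4 a2; rewrite ca; lia.
  move: a3; rewrite ca; lia.
have hr : n = \rank (A *m A^T) by rewrite key mxrank1.
apply: (@leq_trans #|M|).
  by change (n <= #|M|)%N; rewrite {1}hr; apply: leq_trans (mxrankM_maxl _ _) (rank_leq_col _).
by rewrite /M card_draws card_ord.
Qed.
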